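(* Let $(L,\le,\bot,\top)$ be a complete lattice and $(\&_i,\swarrow^i,\nwarrow_i)$, $i=1,\dots,n$, adjoint triples on $L$ with $x\,\&_i\,\top=\top\,\&_i\,x=x$ for all $x\in L$ and all $i$. Let $(A,B,R,\sigma)$ be a normalized context whose concept lattice $\mathcal{M}$ satisfies the ascending chain condition. Then the following are equivalent: (i) $(A,B,R,\sigma)$ has a decomposition into independent subcontexts; (ii) $\mathcal{M}$ has a decomposition into independent blocks.
   Context: An adjoint triple on $L$ is a triple of maps $\&,\swarrow,\nwarrow\colon L\times L\to L$ with $x\le z\swarrow y\iff x\& y\le z\iff y\le z\nwarrow x$. A context is $(A,B,R,\sigma)$ with $A,B$ non-empty, $R\colon A\times B\to L$, $\sigma\colon A\times B\to\{1,\dots,n\}$; normalized means every $a\in A$ has $b_1,b_2$ with $R(a,b_1)\ne\bot$, $R(a,b_2)=\bot$, and every $b\in B$ has $a_1,a_2$ with $R(a_1,b)\ne\bot$, $R(a_2,b)=\bot$. For $g\colon B\to L$, $f\colon A\to L$: $g^\uparrow(a)=\inf_{b}R(a,b)\swarrow^{\sigma(a,b)}g(b)$, $f^\downarrow(b)=\inf_{a}R(a,b)\nwarrow_{\sigma(a,b)}f(a)$. $\mathcal{M}$ is the complete lattice of pairs $\langle g,f\rangle$ with $g^\uparrow=f$, $f^\downarrow=g$, ordered by $g_1\le g_2$ pointwise. For a bounded lattice $(M,\preceq,\bot,\top)$, a block is a sublattice $K\subsetneq M$ with $K\setminus\{\bot,\top\}\ne\varnothing$ and $(\{x\mid k\preceq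 x\}\cup\{x\mid x\preceq k\})\setminus\{\bot,\top\}\subseteq K$ for all $k\in K\setminus\{\bot,\top\}$; blocks $K_1,K_2$ are independent if $K_1\cap K_2\subseteq\{\bot,\top\}$; a decomposition into independent blocks is a family of pairwise independent blocks whose union is $M$. A separable subcontext is a tuple $(Y,X,R_{Y\times X},\sigma_{Y\times X})$ (restrictions of $R,\sigma$) with $Y\subsetneq A$, $X\subsetneq B$ non-empty, $R(a,b)\neq\bot$ for some $a\in Y,b\in X$, $R=\bot$ on $Y\times(B\setminus X)$ and on $(A\setminus Y)\times X$. $\&$ has zero-divisors if $x\&y=\bot$ for some $x,y\neq\bot$. A decomposition into independent subcontexts is a family $\{(A_\lambda,B_\lambda,R_\lambda,\sigma_\lambda)\}_{\lambda\in\Lambda}$, $\Lambda\ne\varnothing$, $R_\lambda,\sigma_\lambda$ restrictions to $A_\lambda\times B_\lambda$, such that each tuple is a separable subcontext, the $A_\lambda$ are pairwise disjoint with union $A$, the $B_\lambda$ are pairwise disjoint with union $B$, and for each $\lambda$ the conjunctor $\&_{\sigma(a,b)}$ has no zero-divisors for all $(a,b)\in((A\setminus A_\lambda)\times B_\lambda)\cup(A_\lambda\times(B\setminus B_\lambda))$. *)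

(* Defs.v *)
From mathcomp Require Import ssreflect ssrbool ssrnat fintype.

Set Implicit Arguments.
Unset Strict Implicit.

Record CLattice := {
  cl_car :> Type;
  cl_le : cl_car -> cl_car -> Prop;
  cl_refl : forall x, cl_le x x;
  cl_trans : forall x y z, cl_le x y -> cl_le y z -> cl_le x z;
  cl_antisym : forall x y, cl_le x y -> cl_le y x -> x = y;
  cl_inf : (cl_car -> Prop) -> cl_car;
  cl_inf_lb : forall (S : cl_car -> Prop) x, S x -> cl_le (cl_inf S) x;
  cl_inf_glb : forall (S : cl_car -> Prop) y,
      (forall x, S x -> cl_le y x) -> cl_le y (cl_inf S)
}.

Definition cl_bot (L : CLattice) : L := @cl_inf L (fun _ => True).
Definition cl_top (L : CLattice) : L := @cl_inf L (fun _ => False).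

Definition adjoint_triple (L : CLattice) (conj sw nw : L -> L -> L) : Prop :=
  forall x y z : L,
    (@cl_le L x (sw z y) <-> @cl_le L (conj x y) z) /\
    (@cl_le L (conj x y) z <-> @cl_le L y (nw z x)).

Definition has_zero_divisors (L : CLattice) (conj : L -> L -> L) : Prop :=
  exists x y : L, x <> cl_bot L /\ y <> cl_bot L /\ conj x y = cl_bot L.

Section Context.
Variables (L : CLattice) (n : nat) (conj sw nw : 'I_n -> L -> L -> L).
Variables (A B : Type) (R : A -> B -> L) (sigma : A -> B -> 'I_n).

Definition normalized : Prop :=
  (forall a, (exists b1, R a b1 <> cl_bot L) /\ (exists b2, R a b2 = cl_bot L)) /\
  (forall b, (exists a1, R a1 b <> cl_bot L) /\ (exists a2, R a2 b = cl_bot L)).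

Definition up (g : B -> L) : A -> L :=
  fun a => @cl_inf L (fun z => exists b, z = sw (sigma a b) (R a b) (g b)).

Definition down (f : A -> L) : B -> L :=
  fun b => @cl_inf L (fun z => exists a, z = nw (sigma a b) (R a b) (f a)).

Definition concept (p : (B -> L) * (A -> L)) : Prop :=
  up (fst p) = snd p /\ down (snd p) = fst p.

Definition concept_le (p q : (B -> L) * (A -> L)) : Prop :=
  forall b, @cl_le L (fst p b) (fst q b).

Definition separable (Y : A -> Prop) (X : B -> Prop) : Prop :=
  (exists a, Y a) /\ (exists a, ~ Y a) /\
  (exists b, X b) /\ (exists b, ~ X b) /\
  (exists a b, Y a /\ X b /\ R a b <> cl_bot L) /\
  (forall a b, Y a -> ~ X b -> R a b = cl_bot L) /\
  (forall a b, ~ Y a -> X b -> R a b = cl_bot L).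

Definition has_independent_subcontext_decomposition : Prop :=
  exists (Lam : Type) (AA : Lam -> A -> Prop) (BB : Lam -> B -> Prop),
    inhabited Lam /\
    (forall l, separable (AA l) (BB l)) /\
    (forall l m a, l <> m -> AA l a -> AA m a -> False) /\
    (forall a, exists l, AA l a) /\
    (forall l m b, l <> m -> BB l b -> BB m b -> False) /\
    (forall b, exists l, BB l b) /\
    (forall l a b,
        ((~ AA l a /\ BB l b) \/ (AA l a /\ ~ BB l b)) ->
        ~ has_zero_divisors (conj (sigma a b))).
End Context.

Section Blocks.
Variables (T : Type) (M : T -> Prop) (le : T -> T -> Prop).

Definition is_bottom (x : T) : Prop := M x /\ forall y, M y -> le x y.
Definition is_top (x : T) : Prop := M x /\ forall y, M y -> le y x.
Definition proper_elt (x : T) : Prop := M x /\ ~ is_bottom x /\ ~ is_top x.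

Definition is_meet (a b m : T) : Prop :=
  M m /\ le m a /\ le m b /\ forall z, M z -> le z a -> le z b -> le z m.
Definition is_join (a b m : T) : Prop :=
  M m /\ le a m /\ le b m /\ forall z, M z -> le a z -> le b z -> le m z.

Definition is_block (K : T -> Prop) : Prop :=
  (forall x, K x -> M x) /\
  (exists x, M x /\ ~ K x) /\
  (forall a b m, K a -> K b -> is_meet a b m -> K m) /\
  (forall a b m, K a -> K b -> is_join a b m -> K m) /\
  (exists k, K k /\ proper_elt k) /\
  (forall k x, K k -> proper_elt k -> proper_elt x ->
      (le k x \/ le x k) -> K x).

Definition independent_blocks (K1 K2 : T -> Prop) : Prop :=
  forall x, K1 x -> K2 x -> is_bottom x \/ is_top x.

Definition has_independent_block_decomposition : Prop :=
  exists (J : Type) (K : J -> T -> Prop),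
    (forall j, is_block (K j)) /\
    (forall j j', j <> j' -> independent_blocks (K j) (K j')) /\
    (forall x, M x <-> exists j, K j x).

Definition ACC : Prop :=
  forall c : nat -> T, (forall k, M (c k)) -> (forall k, le (c k) (c (S k))) ->
    exists N, forall m, N <= m -> c m = c N.
End Blocks.

(* Main.v *)
Require Import Defs.
From mathcomp Require Import ssreflect ssrbool ssrnat fintype.
From Stdlib Require Import Classical FunctionalExtensionality.

Set Implicit Arguments.
Unset Strict Implicit.

Section Main.
Variables (L : CLattice) (n : nat) (cj sw nw : 'I_n -> L -> L -> L).
Hypothesis Hadj : forall i, adjoint_triple (cj i) (sw i) (nw i).
Hypothesis Hunit : forall i (x : L), cj i x (cl_top L) = x /\ cj i (cl_top L) x = x.
Variables (A B : Type) (R : A -> B -> L) (sigma : A -> B -> 'I_n).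
Hypothesis HA : inhabited A.
Hypothesis Hnorm : normalized R.

Local Notation le := (@cl_le L).
Local Notation bot := (cl_bot L).
Local Notation top := (cl_top L).
Definition U (g : B -> L) : A -> L := up sw R sigma g.
Definition D (f : A -> L) : B -> L := down nw R sigma f.
Definition CM := concept sw nw R sigma.
Definition CLE := @concept_le L A B.

Lemma le_bot x : le bot x.
Proof. exact (@cl_inf_lb L (fun _ => True) x I). Qed.
Lemma le_top x : le x top.
Proof. apply cl_inf_glb. intros y F; destruct F. Qed.
Lemma antis x y : le x y -> le y x -> x = y.
Proof. apply cl_antisym. Qed.
Lemma letr x y z : le x y -> le y z -> le x z.
Proof. apply cl_trans. Qed.
Lemma adj1 i x y z : le x (sw i z y) <-> le (cj i x y) z.
Proof. exact (proj1 (Hadj i x y z)). Qed.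
Lemma adj2 i x y z : le (cj i x y) z <-> le y (nw i z x).
Proof. exact (proj2 (Hadj i x y z)). Qed.
Lemma cj_bot_l i y : cj i bot y = bot.
Proof. apply antis; [|apply le_bot]. apply adj1. apply le_bot. Qed.
Lemma cj_bot_r i x : cj i x bot = bot.
Proof. apply antis; [|apply le_bot]. apply adj2. apply le_bot. Qed.
Lemma cj_mono i x x' y y' : le x x' -> le y y' -> le (cj i x y) (cj i x' y').
Proof.
  intros H1 H2. apply letr with (cj i x' y).
  - apply adj1. apply letr with x'; auto. apply adj1. apply cl_refl.
  - apply adj2. apply letr with y'; auto. apply adj2. apply cl_refl.
Qed.
Lemma cj_top_l i x : cj i top x = x.
Proof. exact (proj2 (Hunit i x)). Qed.
Lemma cj_top_r i x : cj i x top = x.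
Proof. exact (proj1 (Hunit i x)). Qed.
Lemma cj_le_bot_l i x y z : le x bot -> le (cj i x y) z.
Proof. intro H. apply letr with (cj i bot y). apply cj_mono; auto. apply cl_refl.
  rewrite cj_bot_l. apply le_bot. Qed.
Lemma cj_le_bot_r i x y z : le y bot -> le (cj i x y) z.
Proof. intro H. apply letr with (cj i x bot). apply cj_mono; auto. apply cl_refl.
  rewrite cj_bot_r. apply le_bot. Qed.

Lemma nontriv : bot <> top.
Proof.
  intro E. destruct HA as [a]. destruct (proj1 Hnorm a) as [[b1 Hb1] _].
  apply Hb1. apply antis; [|apply le_bot]. rewrite E. apply le_top.
Qed.

Lemma le_up_iff x g a : le x (U g a) <-> forall b, le (cj (sigma a b) x (g b)) (R a b).
Proof.
  unfold U, up. split.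
  - intros H b. apply adj1. eapply letr. apply H. apply cl_inf_lb. exists b; reflexivity.
  - intros H. apply cl_inf_glb. intros z [b ->]. apply adj1. apply H.
Qed.
Lemma le_down_iff y f b : le y (D f b) <-> forall a, le (cj (sigma a b) (f a) y) (R a b).
Proof.
  unfold D, down. split.
  - intros H a. apply adj2. eapply letr. apply H. apply cl_inf_lb. exists a; reflexivity.
  - intros H. apply cl_inf_glb. intros z [a ->]. apply adj2. apply H.
Qed.

Definition fleA (f1 f2 : A -> L) := forall a, le (f1 a) (f2 a).
Definition fleB (f1 f2 : B -> L) := forall b, le (f1 b) (f2 b).

Lemma ext_up g : fleB g (D (U g)).
Proof. intro b. apply le_down_iff. intro a. apply (proj1 (le_up_iff _ _ _) (cl_refl _)). Qed.
Lemma ext_down f : fleA f (U (D f)).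
Proof. intro a. apply le_up_iff. intro b. apply (proj1 (le_down_iff _ _ _) (cl_refl _)). Qed.
Lemma up_anti g1 g2 : fleB g1 g2 -> fleA (U g2) (U g1).
Proof. intros H a. apply le_up_iff. intro b. apply letr with (cj (sigma a b) (U g2 a) (g2 b)).
  apply cj_mono; auto. apply cl_refl. apply (proj1 (le_up_iff _ _ _) (cl_refl _)). Qed.
Lemma down_anti f1 f2 : fleA f1 f2 -> fleB (D f2) (D f1).
Proof. intros H b. apply le_down_iff. intro a. apply letr with (cj (sigma a b) (f2 a) (D f2 b)).
  apply cj_mono; auto. apply cl_refl. apply (proj1 (le_down_iff _ _ _) (cl_refl _)). Qed.
Lemma feq {X} (f g : X -> L) : (forall x, le (f x) (g x)) -> (forall x, le (g x) (f x)) -> f = g.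
Proof. intros H1 H2. apply functional_extensionality. intro x. apply antis; auto. Qed.
Lemma UDU g : U (D (U g)) = U g.
Proof. apply feq. apply up_anti, ext_up. apply ext_down. Qed.
Lemma DUD f : D (U (D f)) = D f.
Proof. apply feq. apply down_anti, ext_down. apply ext_up. Qed.

Definition mkA (f : A -> L) : (B -> L) * (A -> L) := (D f, U (D f)).
Definition mkB (g : B -> L) : (B -> L) * (A -> L) := (D (U g), U g).
Lemma mkA_cm f : CM (mkA f).
Proof. split; simpl. reflexivity. apply DUD. Qed.
Lemma mkB_cm g : CM (mkB g).
Proof. split; simpl. apply UDU. reflexivity. Qed.
Lemma cm_fst p : CM p -> fst p = D (snd p).
Proof. intros [_ H]. symmetry. exact H. Qed.
Lemma cm_snd p : CM p -> snd p = U (fst p).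
Proof. intros [H _]. symmetry. exact H. Qed.
Lemma cp_le p a b : CM p -> le (cj (sigma a b) (snd p a) (fst p b)) (R a b).
Proof. intro Hp. rewrite (cm_snd Hp). apply (proj1 (le_up_iff _ _ _) (cl_refl _)). Qed.
Lemma le_mkA p f : CM p -> fleA f (snd p) -> CLE p (mkA f).
Proof. intros Hp H b. rewrite (cm_fst Hp). simpl. apply down_anti. exact H. Qed.
Lemma mkB_mono g1 g2 : fleB g1 g2 -> CLE (mkB g1) (mkB g2).
Proof. intros H b. simpl. apply down_anti, up_anti, H. Qed.
Lemma mkA_anti f1 f2 : fleA f1 f2 -> CLE (mkA f2) (mkA f1).
Proof. intros H b. simpl. apply down_anti, H. Qed.
Lemma cle_trans p q r : CLE p q -> CLE q r -> CLE p r.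
Proof. intros H1 H2 b. eapply letr; eauto. Qed.

Definition pt {X : Type} (x : X) (v : L) : X -> L :=
  fun y => @cl_inf L (fun z => z = v \/ y <> x).
Lemma pt_le {X} (x : X) v y : le (pt x v y) v.
Proof. apply cl_inf_lb. left; reflexivity. Qed.
Lemma pt_at {X} (x : X) v : le v (pt x v x).
Proof. apply cl_inf_glb. intros z [->|H]. apply cl_refl. congruence. Qed.
Lemma pt_ne {X} (x : X) v y : y <> x -> le (pt x v y) bot.
Proof. intro H. apply cl_inf_lb. right; exact H. Qed.
Lemma pt_mono {X} (x : X) v w : le v w -> forall y, le (pt x v y) (pt x w y).
Proof. intros H y. destruct (classic (y = x)) as [->|Hn].
  - eapply letr. apply pt_le. eapply letr. apply H. apply pt_at.
  - eapply letr. apply pt_ne, Hn. apply le_bot. Qed.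

Definition cbot := mkA (fun _ => top).
Definition ctop := mkA (fun _ => bot).
Lemma cbot_fst b : le (fst cbot b) bot.
Proof.
  destruct (proj2 Hnorm b) as [_ [a2 Ha2]]. simpl. unfold D, down.
  eapply letr. apply cl_inf_lb. exists a2. reflexivity.
  pose proof (proj2 (adj2 (sigma a2 b) top (nw (sigma a2 b) (R a2 b) top) (R a2 b)) (cl_refl _)) as H.
  rewrite cj_top_l Ha2 in H. rewrite Ha2. exact H.
Qed.
Lemma ctop_fst b : le top (fst ctop b).
Proof. simpl. apply le_down_iff. intro a. rewrite cj_bot_l. apply le_bot. Qed.

Notation isbot := (is_bottom CM CLE).
Notation istop := (is_top CM CLE).
Notation proper := (proper_elt CM CLE).

Lemma isbot_iff x : isbot x <-> CM x /\ forall b, fst x b = bot.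
Proof.
  split.
  - intros [Hx H]. split; auto. intro b. apply antis; [|apply le_bot].
    eapply letr. apply (H cbot (mkA_cm _)). apply cbot_fst.
  - intros [Hx H]. split; auto. intros y _ b. rewrite H. apply le_bot.
Qed.
Lemma istop_iff x : istop x <-> CM x /\ forall b, fst x b = top.
Proof.
  split.
  - intros [Hx H]. split; auto. intro b. apply antis; [apply le_top|].
    eapply letr. apply ctop_fst. apply (H ctop (mkA_cm _)).
  - intros [Hx H]. split; auto. intros y _ b. rewrite H. apply le_top.
Qed.

Lemma top_snd p : CM p -> (forall b, fst p b = top) -> forall a, snd p a = bot.
Proof.
  intros Hp H a. destruct (proj1 Hnorm a) as [_ [b2 Hb2]].
  apply antis; [|apply le_bot]. pose proof (cp_le a b2 Hp) as C.
  rewrite H cj_top_r Hb2 in C. exact C.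
Qed.
Lemma snd_bot_top p : CM p -> (forall a, snd p a = bot) -> forall b, fst p b = top.
Proof.
  intros Hp H b. apply antis; [apply le_top|]. rewrite (cm_fst Hp).
  apply le_down_iff. intro a. rewrite H cj_bot_l. apply le_bot.
Qed.

Lemma nb_wit x : CM x -> ~ isbot x -> exists b, fst x b <> bot.
Proof.
  intros Hx Hn. apply NNPP. intro H. apply Hn. apply isbot_iff. split; auto.
  intro b. apply NNPP. intro H'. apply H. exists b. exact H'.
Qed.
Lemma nt_wit x : CM x -> ~ istop x -> exists a, snd x a <> bot.
Proof.
  intros Hx Hn. apply NNPP. intro H. apply Hn. apply istop_iff. split; auto.
  apply snd_bot_top; auto.
  intro a. apply NNPP. intro H'. apply H. exists a. exact H'.
Qed.
Lemma le_not_top p q : CM p -> CM q -> CLE p q -> ~ istop q -> ~ istop p.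
Proof.
  intros Hp Hq Hpq Hn Ht. apply Hn. apply istop_iff. split; auto.
  intro b. apply antis; [apply le_top|]. rewrite <- (proj2 (proj1 (istop_iff p) Ht) b). apply Hpq.
Qed.
Lemma le_not_bot p q : CM p -> CM q -> CLE p q -> ~ isbot p -> ~ isbot q.
Proof.
  intros Hp Hq Hpq Hn Ht. apply Hn. apply isbot_iff. split; auto.
  intro b. apply antis; [|apply le_bot]. rewrite <- (proj2 (proj1 (isbot_iff q) Ht) b). apply Hpq.
Qed.

Definition X (a : A) := mkA (pt a top).
Definition Y (b : B) := mkB (pt b top).

Lemma fstX a b : fst (X a) b = R a b.
Proof.
  apply antis.
  - simpl. unfold D, down. eapply letr. apply cl_inf_lb. exists a. reflexivity.
    set (y := nw (sigma a b) (R a b) (pt a top a)).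
    pose proof (proj2 (adj2 (sigma a b) (pt a top a) y (R a b)) (cl_refl _)) as H.
    eapply letr; [|exact H]. rewrite <- (cj_top_l (sigma a b) y) at 1.
    apply cj_mono. apply pt_at. apply cl_refl.
  - simpl. apply le_down_iff. intro a'. destruct (classic (a' = a)) as [->|Hn].
    + eapply letr. apply cj_mono. apply le_top. apply cl_refl. rewrite cj_top_l. apply cl_refl.
    + apply cj_le_bot_l. apply pt_ne, Hn.
Qed.
Lemma sndY a b : snd (Y b) a = R a b.
Proof.
  apply antis.
  - simpl. unfold U, up. eapply letr. apply cl_inf_lb. exists b. reflexivity.
    set (y := sw (sigma a b) (R a b) (pt b top b)).
    pose proof (proj1 (adj1 (sigma a b) y (pt b top b) (R a b)) (cl_refl _)) as H.
    eapply letr; [|exact H]. rewrite <- (cj_top_r (sigma a b) y) at 1.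
    apply cj_mono. apply cl_refl. apply pt_at.
  - simpl. apply le_up_iff. intro b'. destruct (classic (b' = b)) as [->|Hn].
    + eapply letr. apply cj_mono. apply cl_refl. apply le_top. rewrite cj_top_r. apply cl_refl.
    + apply cj_le_bot_r. apply pt_ne, Hn.
Qed.
Lemma fstY b : fst (Y b) b = top.
Proof. apply antis. apply le_top. eapply letr. apply (pt_at b top). apply ext_up. Qed.

Lemma X_proper a : proper (X a).
Proof.
  split; [apply mkA_cm|split].
  - intro H. destruct (proj1 Hnorm a) as [[b1 Hb1] _]. apply Hb1.
    rewrite <- fstX. exact (proj2 (proj1 (isbot_iff _) H) b1).
  - intro H. destruct (proj1 Hnorm a) as [_ [b2 Hb2]]. apply nontriv.
    rewrite <- Hb2, <- fstX. exact (proj2 (proj1 (istop_iff _) H) b2).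
Qed.
Lemma Y_proper b : proper (Y b).
Proof.
  split; [apply mkB_cm|split].
  - intro H. apply nontriv. rewrite <- (fstY b). symmetry. exact (proj2 (proj1 (isbot_iff _) H) b).
  - intro H. destruct (proj2 Hnorm b) as [[a1 Ha1] _]. apply Ha1.
    rewrite <- sndY. apply top_snd. apply mkB_cm. exact (proj2 (proj1 (istop_iff _) H)).
Qed.

Section Dir2.
Variables (J : Type) (K : J -> (B -> L) * (A -> L) -> Prop).
Hypothesis Hblk : forall j, is_block CM CLE (K j).
Hypothesis Hind : forall j j', j <> j' -> independent_blocks CM CLE (K j) (K j').
Hypothesis Hcov : forall x, CM x <-> exists j, K j x.

Lemma comp j k x : K j k -> proper k -> proper x -> (CLE k x \/ CLE x k) -> K j x.
Proof. intros H1 H2 H3 H4. destruct (Hblk j) as [_ [_ [_ [_ [_ H]]]]]. eapply H; eauto. Qed.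

Local Hint Extern 1 (_ \/ _) => (left; assumption) : core.
Local Hint Extern 1 (_ \/ _) => (right; assumption) : core.

Lemma W z a : proper z -> snd z a <> bot ->
  let w := mkA (pt a (snd z a)) in proper w /\ CLE z w /\ CLE (X a) w.
Proof.
  intros [Hz [Hzb Hzt]] Ha w.
  assert (H1 : CLE z w).
  { apply le_mkA; auto. intro a'. destruct (classic (a' = a)) as [->|Hn].
    apply pt_le. eapply letr. apply pt_ne, Hn. apply le_bot. }
  assert (H2 : CLE (X a) w).
  { apply mkA_anti. intro y. apply pt_mono. apply le_top. }
  split; [|split; auto].
  split; [apply mkA_cm|split].
  - apply le_not_bot with (X a); auto. apply mkA_cm. apply mkA_cm. apply X_proper.
  - intro Ht. apply Ha. apply antis; [|apply le_bot].
    pose proof (top_snd (mkA_cm _) (proj2 (proj1 (istop_iff _) Ht)) a) as E.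
    eapply letr. apply (pt_at a (snd z a)). eapply letr. apply ext_down.
    unfold w in E. simpl in E. rewrite E. apply cl_refl.
Qed.

Lemma z_in j z a : proper z -> snd z a <> bot -> (K j z <-> K j (X a)).
Proof.
  intros Hz Ha. destruct (W Hz Ha) as [Hw [H1 H2]]. pose proof (X_proper a) as HX. split; intro H.
  - apply (comp (k:=mkA (pt a (snd z a)))); auto.
    apply (comp (k:=z)); auto.
  - apply (comp (k:=mkA (pt a (snd z a)))); auto.
    apply (comp (k:=X a)); auto.
Qed.

Lemma L1 j a b : R a b <> bot -> (K j (X a) <-> K j (Y b)).
Proof.
  intro Hab. set (z := mkB (pt b (R a b))).
  assert (Hzx : CLE z (X a)).
  { apply le_mkA. apply mkB_cm. intro a'. destruct (classic (a' = a)) as [->|Hn].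
    - simpl. apply le_up_iff. intro b'. destruct (classic (b' = b)) as [->|Hn'].
      + eapply letr. apply cj_mono. apply le_top. apply pt_le. rewrite cj_top_l. apply cl_refl.
      + apply cj_le_bot_r. apply pt_ne, Hn'.
    - eapply letr. apply pt_ne, Hn. apply le_bot. }
  assert (Hzy : CLE z (Y b)).
  { apply mkB_mono. intro y0. apply pt_mono. apply le_top. }
  assert (Hz : proper z).
  { split; [apply mkB_cm|split].
    - intro H. apply Hab. apply antis; [|apply le_bot].
      rewrite <- (proj2 (proj1 (isbot_iff _) H) b).
      eapply letr. apply (pt_at b (R a b)). apply ext_up.
    - apply le_not_top with (X a); auto. apply mkB_cm. apply mkA_cm. apply X_proper. }
  pose proof (X_proper a) as HX. pose proof (Y_proper b) as HY.
  split; intro H.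
  - apply (comp (k:=z)); auto. apply (comp (k:=X a)); auto.
  - apply (comp (k:=z)); auto. apply (comp (k:=Y b)); auto.
Qed.

Lemma L4 j k a b x y : K j (X a) -> K k (Y b) -> j <> k -> x <> bot -> y <> bot ->
  cj (sigma a b) x y = bot -> False.
Proof.
  intros HjX HkY Hjk Hx Hy Hxy. set (z := mkB (pt b y)).
  assert (Hzy : CLE z (Y b)).
  { apply mkB_mono. intro y0. apply pt_mono. apply le_top. }
  assert (Hsa : le x (snd z a)).
  { simpl. apply le_up_iff. intro b'. destruct (classic (b' = b)) as [->|Hn'].
    + eapply letr. apply cj_mono. apply cl_refl. apply pt_le. rewrite Hxy. apply le_bot.
    + apply cj_le_bot_r. apply pt_ne, Hn'. }
  assert (Hz : proper z).
  { split; [apply mkB_cm|split].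
    - intro H. apply Hy. apply antis; [|apply le_bot].
      rewrite <- (proj2 (proj1 (isbot_iff _) H) b).
      eapply letr. apply (pt_at b y). apply ext_up.
    - apply le_not_top with (Y b); auto. apply mkB_cm. apply mkB_cm. apply Y_proper. }
  assert (Hna : snd z a <> bot).
  { intro E. apply Hx. apply antis; [|apply le_bot]. rewrite <- E. exact Hsa. }
  assert (Kk : K k z). { apply (comp (k:=Y b)); auto. apply Y_proper. }
  assert (Kj : K j z). { apply (proj2 (z_in j Hz Hna)). exact HjX. }
  destruct Hz as [_ [Hb Ht]]. destruct (Hind Hjk Kj Kk) as [H|H]; auto.
Qed.

Lemma allX j : (forall a, K j (X a)) -> False.
Proof.
  intro H. destruct (Hblk j) as [_ [[x [Hx Hnx]] _]].
  destruct (proj1 (Hcov x) Hx) as [j' Hj'].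
  assert (Hne : j <> j'). { intro E. subst. auto. }
  destruct (Hblk j') as [_ [_ [_ [_ [[k [Hk Hkp]] _]]]]].
  pose proof Hkp as [Hkm [Hkb Hkt]].
  destruct (nt_wit Hkm Hkt) as [a Ha].
  assert (K j k). { apply (proj2 (z_in j Hkp Ha)). apply H. }
  destruct (Hind Hne H0 Hk); auto.
Qed.

Lemma dir2 : has_independent_subcontext_decomposition cj R sigma.
Proof.
  exists J, (fun j a => K j (X a)), (fun j b => K j (Y b)).
  assert (XJ : forall a, exists j, K j (X a)).
  { intro a. apply Hcov. apply X_proper. }
  assert (YJ : forall b, exists j, K j (Y b)).
  { intro b. apply Hcov. apply Y_proper. }
  assert (Xd : forall l m a, l <> m -> K l (X a) -> K m (X a) -> False).
  { intros l m a Hlm H1 H2. pose proof (X_proper a) as [_ [? ?]]. destruct (Hind Hlm H1 H2); auto. }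
  assert (Yd : forall l m b, l <> m -> K l (Y b) -> K m (Y b) -> False).
  { intros l m b Hlm H1 H2. pose proof (Y_proper b) as [_ [? ?]]. destruct (Hind Hlm H1 H2); auto. }
  split.
  { destruct HA as [a]. destruct (XJ a) as [j _]. exact (inhabits j). }
  split.
  { intro j. unfold separable.
    assert (Ha : exists a, K j (X a)).
    { destruct (Hblk j) as [_ [_ [_ [_ [[k [Hk Hkp]] _]]]]].
      pose proof Hkp as [Hkm [Hkb Hkt]].
      destruct (nt_wit Hkm Hkt) as [a Ha]. exists a.
      apply (proj1 (z_in j Hkp Ha)). exact Hk. }
    destruct Ha as [a Ha].
    destruct (proj1 Hnorm a) as [[b1 Hb1] _].
    split. exists a; auto.
    split. { apply NNPP. intro H. apply (allX (j:=j)). intro a'. apply NNPP. intro H'. apply H. exists a'. exact H'. }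
    split. exists b1. apply (L1 j Hb1). exact Ha.
    split. { apply NNPP. intro H. apply (allX (j:=j)). intro a'.
      destruct (proj1 Hnorm a') as [[b' Hb'] _]. apply (proj2 (L1 j Hb')).
      apply NNPP. intro H'. apply H. exists b'. exact H'. }
    split. exists a, b1. split; auto. split; auto. apply (L1 j Hb1). exact Ha.
    split.
    - intros a' b' H1 H2. apply NNPP. intro H3. apply H2. apply (L1 j H3). exact H1.
    - intros a' b' H1 H2. apply NNPP. intro H3. apply H1. apply (proj2 (L1 j H3)). exact H2. }
  split. exact Xd. split. exact XJ. split. exact Yd. split. exact YJ.
  intros l a b H [x [y [Hx [Hy Hxy]]]].
  destruct (XJ a) as [j Hj]. destruct (YJ b) as [k Hk].
  destruct H as [[H1 H2]|[H1 H2]].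
  - apply (@L4 j l a b x y); auto. intro E; subst; auto.
  - apply (@L4 l k a b x y); auto. intro E; subst; auto.
Qed.
End Dir2.

Lemma dir1 : has_independent_subcontext_decomposition cj R sigma ->
  has_independent_block_decomposition CM CLE.
Proof.
  intros [Lam [AA [BB [[l0] [Hsep [HAd [HAc [HBd [HBc Hz]]]]]]]]].
  set (Kf := fun l (x : (B -> L) * (A -> L)) =>
        CM x /\ ((forall b, fst x b = top) \/ (forall b, ~ BB l b -> fst x b = bot))).
  assert (Supp : forall l x b0 b1, CM x -> BB l b0 -> fst x b0 <> bot -> ~ BB l b1 ->
            fst x b1 <> bot -> forall b, fst x b = top).
  { intros l x b0 b1 Hx Hb0 Hg0 Hb1 Hg1. apply snd_bot_top; auto. intro a.
    destruct (HAc a) as [nu Hnu].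
    assert (Hex : exists b2, ~ BB nu b2 /\ fst x b2 <> bot).
    { destruct (classic (nu = l)) as [->|Hne]. exists b1; auto.
      exists b0. split; auto. intro H. exact (HBd nu l b0 Hne H Hb0). }
    destruct Hex as [b2 [Hnb Hg]].
    assert (HR : R a b2 = bot).
    { destruct (Hsep nu) as [_ [_ [_ [_ [_ [H _]]]]]]. apply H; auto. }
    assert (Hzd := Hz nu a b2 (or_intror (conj Hnu Hnb))).
    apply NNPP. intro Hne. apply Hzd. exists (snd x a), (fst x b2).
    split; auto. split; auto. apply antis; [|apply le_bot]. rewrite <- HR. apply cp_le. exact Hx. }
  assert (SuppK : forall l x b0, CM x -> ~ (forall b, fst x b = top) -> BB l b0 ->
            fst x b0 <> bot -> forall b1, ~ BB l b1 -> fst x b1 = bot).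
  { intros l x b0 Hx Hnt Hb0 Hg0 b1 Hb1. apply NNPP. intro Hg1. apply Hnt.
    exact (Supp l x b0 b1 Hx Hb0 Hg0 Hb1 Hg1). }
  assert (NotTop : forall x, proper x -> ~ (forall b, fst x b = top)).
  { intros x [Hx [_ Ht]] H. apply Ht. apply istop_iff. auto. }
  assert (XinK : forall l a, AA l a -> Kf l (X a)).
  { intros l a Ha. split. apply mkA_cm. right. intros b Hb. rewrite fstX.
    destruct (Hsep l) as [_ [_ [_ [_ [_ [H _]]]]]]. apply H; auto. }
  exists Lam, Kf. split; [|split].
  - intro l. unfold is_block. split; [|split; [|split; [|split; [|split]]]].
    + intros x [Hx _]. exact Hx.
    + destruct (Hsep l) as [_ [[a Ha] _]]. destruct (HAc a) as [mu Hmu].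
      assert (Hne : mu <> l). { intro E; subst; auto. }
      destruct (Hsep mu) as [_ [_ [_ [_ [[a1 [b1 [Ha1 [Hb1 HR]]]] _]]]]].
      exists (X a1). split. apply mkA_cm. intros [_ [H|H]].
      * apply (NotTop _ (X_proper a1)). exact H.
      * apply HR. rewrite <- fstX. apply H. intro Hb. exact (HBd mu l b1 Hne Hb1 Hb).
    + intros a b m [Ha Ha'] [Hb Hb'] [Hm [Hma [Hmb Hmax]]]. split; auto.
      destruct Ha' as [Ha'|Ha'].
      * destruct Hb' as [Hb'|Hb'].
        -- left. intro b0. apply antis; [apply le_top|].
           eapply letr. apply ctop_fst. apply Hmax. apply mkA_cm.
           intro b1. rewrite Ha'. apply le_top. intro b1. rewrite Hb'. apply le_top.
        -- right. intros b0 Hb0. apply antis; [|apply le_bot]. rewrite <- (Hb' b0 Hb0). apply Hmb.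
      * right. intros b0 Hb0. apply antis; [|apply le_bot]. rewrite <- (Ha' b0 Hb0). apply Hma.
    + intros a b m [Ha Ha'] [Hb Hb'] [Hm [Ham [Hbm Hmin]]]. split; auto.
      destruct (classic (forall b0, fst m b0 = top)) as [Ht|Hnt]; [left; exact Ht|right].
      assert (Hat : ~ (forall b0, fst a b0 = top)).
      { intro H. apply Hnt. intro b0. apply antis; [apply le_top|]. rewrite <- (H b0). apply Ham. }
      assert (Hbt : ~ (forall b0, fst b b0 = top)).
      { intro H. apply Hnt. intro b0. apply antis; [apply le_top|]. rewrite <- (H b0). apply Hbm. }
      destruct Ha' as [Ha'|Ha']; [contradiction|]. destruct Hb' as [Hb'|Hb']; [contradiction|].
      intros b1 Hb1.
      destruct (classic (exists b0, fst a b0 <> bot)) as [[b0 Hg]|Hna].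
      { assert (BB l b0). { apply NNPP. intro H. apply Hg. apply Ha'; auto. }
        apply (SuppK l m b0); auto. intro E. apply Hg. apply antis; [|apply le_bot].
        rewrite <- E. apply Ham. }
      destruct (classic (exists b0, fst b b0 <> bot)) as [[b0 Hg]|Hnb].
      { assert (BB l b0). { apply NNPP. intro H. apply Hg. apply Hb'; auto. }
        apply (SuppK l m b0); auto. intro E. apply Hg. apply antis; [|apply le_bot].
        rewrite <- E. apply Hbm. }
      apply antis; [|apply le_bot].
      eapply letr; [apply (Hmin cbot (mkA_cm _))| apply cbot_fst].
      { intro b0. destruct (classic (fst a b0 = bot)) as [E|E]. rewrite E. apply le_bot.
        exfalso. apply Hna. exists b0. exact E. }
      { intro b0. destruct (classic (fst b b0 = bot)) as [E|E]. rewrite E. apply le_bot.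
        exfalso. apply Hnb. exists b0. exact E. }
    + destruct (Hsep l) as [_ [_ [_ [_ [[a1 [b1 [Ha1 [Hb1 HR]]]] _]]]]].
      exists (X a1). split. apply XinK; auto. apply X_proper.
    + intros k x [Hk Hk'] Hkp Hxp Hcmp. pose proof Hxp as [Hx [Hxb Hxt]].
      split; auto. right.
      destruct Hk' as [Hk'|Hk']; [exfalso; exact (NotTop _ Hkp Hk')|].
      destruct Hcmp as [Hle|Hle].
      * pose proof Hkp as [_ [Hkb _]]. destruct (nb_wit Hk Hkb) as [b0 Hg].
        assert (BB l b0). { apply NNPP. intro H. apply Hg. apply Hk'; auto. }
        apply (SuppK l x b0); auto.
        intro E. apply Hg. apply antis; [|apply le_bot]. rewrite <- E. apply Hle.
      * intros b0 Hb0. apply antis; [|apply le_bot]. rewrite <- (Hk' b0 Hb0). apply Hle.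
  - intros l m Hlm x [Hx Hl] [_ Hm].
    destruct Hl as [Hl|Hl]. right. apply istop_iff; auto.
    destruct Hm as [Hm|Hm]. right. apply istop_iff; auto.
    left. apply isbot_iff. split; auto. intro b.
    destruct (classic (BB l b)) as [Hb|Hb].
    + apply Hm. intro Hb'. exact (HBd l m b Hlm Hb Hb').
    + apply Hl; auto.
  - intro x. split.
    + intro Hx. destruct (classic (forall b, fst x b = top)) as [Ht|Hnt].
      { exists l0. split; auto. }
      destruct (classic (exists b0, fst x b0 <> bot)) as [[b0 Hg]|Hn].
      * destruct (HBc b0) as [l Hl]. exists l. split; auto. right.
        apply (SuppK l x b0); auto.
      * exists l0. split; auto. right. intros b _. apply NNPP. intro E. apply Hn. exists b; auto.
    + intros [l [Hx _]]. exact Hx.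
Qed.
End Main.

Theorem corollary37
  (L : CLattice) (n : nat) (conj sw nw : 'I_n -> L -> L -> L)
  (Hadj : forall i, adjoint_triple (conj i) (sw i) (nw i))
  (Hunit : forall i (x : L), conj i x (cl_top L) = x /\ conj i (cl_top L) x = x)
  (A B : Type) (HA : inhabited A) (HB : inhabited B)
  (R : A -> B -> L) (sigma : A -> B -> 'I_n)
  (Hnorm : normalized R)
  (Hacc : ACC (concept sw nw R sigma) (@concept_le L A B)) :
  has_independent_subcontext_decomposition conj R sigma <->
  has_independent_block_decomposition (concept sw nw R sigma) (@concept_le L A B).
Proof.
  split.
  - intro H. exact (dir1 Hadj Hunit HA Hnorm H).
  - intros [J [K [H1 [H2 H3]]]]. exact (dir2 Hadj Hunit HA Hnorm H1 H2 H3).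
Qed.
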